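(* Let $\Phi$ be an automorphism of the category $(Rep\text{-}R)^0$ with $\Phi((W_1,F_1))=(W_1,F_1)$, so that $\Phi$ restricts to a monoid automorphism of $End_1$. Then $$\Phi(T_e)=T_e,\quad \Phi(T_0)=T_0,\quad \Phi(T_x)=T_x,\quad \Phi(\nu_{(0,x)})=\nu_{(0,x)}.$$
   Context: $R$ is a commutative associative ring with unit. A group representation $(A,G,\cdot)$ is a unital $R$-module $A$ with a right action of the group $G$ by $R$-module automorphisms. A homomorphism is a pair $(\mu^{(1)},\mu^{(2)})$ (an $R$-linear map and a group homomorphism) with $\mu^{(1)}(a\cdot g)=\mu^{(1)}(a)\bullet\mu^{(2)}(g)$. A free representation over a pair of sets $(Y,X)$ is $(W,F)$, where $F$ is the free group on $X$ and $W$ is the free right $RF$-module on $Y$, with $F$ acting by right multiplication. $(Rep\text{-}R)^0$ is the category of free representations over pairs $(Y,X)$ of finite subsets of fixed infinite sets $Y_0,X_0$, with all homomorphisms. $(W_1,F_1)$ is the free representation with one module generator and one group generator: $F_1=\langle x\rangle$ is infinite cyclic with identity $e$, and $W_1=RF_1$. $End_1$ is its endomorphism monoid, and $\nu_{(w,g)}$ is the endomorphism with $1\mapsto w$, $x\mapsto g$. Finally, $$T_e=\{\nu_{(w,e)}:w\in W_1\},\quad T_0=\{\nu_{(0,g)}:g\in F_1\},\quad T_x=\{\nu_{(w,x)}:w\in W_1\}.$$ *)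

(* Defs.v *)
From HB Require Import structures.
From mathcomp Require Import all_boot all_order all_algebra.
From mathcomp Require Import finmap.
Set Implicit Arguments. Unset Strict Implicit. Unset Printing Implicit Defensive.
Import GRing.Theory.
Local Open Scope fset_scope.
Local Open Scope ring_scope.

Section FreeGroup.
Variable L : finType.

Definition letter := (L * bool)%type.
Definition inv_letter (a : letter) : letter := (a.1, ~~ a.2).

Definition reduced (w : seq letter) : bool :=
  sorted (fun a b => b != inv_letter a) w.

Definition push (a : letter) (w : seq letter) : seq letter :=
  if w is b :: w' then (if b == inv_letter a then w' else a :: w) else [:: a].

Lemma push_reduced a w : reduced w -> reduced (push a w).
Proof.
case: w => [|b w] //= Hw.
case: ifP => Hb.
  by case: w Hw => [|c w] //= /andP[].
by rewrite /reduced /= Hb.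
Qed.

Record fgword := FGW { fgw_val :> seq letter; fgw_red : reduced fgw_val }.

HB.instance Definition _ := [isSub for fgw_val].
HB.instance Definition _ := [Countable of fgword by <:].

Lemma foldr_push_reduced u v : reduced v -> reduced (foldr push v u).
Proof. by elim: u => [|a u IH] //= Hv; apply: push_reduced; apply: IH. Qed.

Lemma nil_reduced : reduced [::]. Proof. by []. Qed.

Definition fg_one : fgword := FGW nil_reduced.
Definition fg_mul (u v : fgword) : fgword :=
  FGW (foldr_push_reduced u (fgw_red v)).
Lemma inv_reduced (u : seq letter) :
  reduced (foldl (fun acc a => push (inv_letter a) acc) [::] u).
Proof.
suff H : forall acc, reduced acc ->
  reduced (foldl (fun acc a => push (inv_letter a) acc) acc u) by exact: H.
by elim: u => [|a u IH] //= acc Hacc; apply: IH; apply: push_reduced.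
Qed.
Definition fg_inv (u : fgword) : fgword := FGW (inv_reduced u).

Lemma gen_reduced (x : L) : reduced [:: (x, true)]. Proof. by []. Qed.
Definition fg_gen (x : L) : fgword := FGW (gen_reduced x).

End FreeGroup.

Definition is_ghom (L L' : finType) (f : fgword L -> fgword L') :=
  forall u v, f (fg_mul u v) = fg_mul (f u) (f v).

Section FreeModule.
Variables (R : comNzRingType) (Y L : finType).

(* elements: finitely supported R-valued functions on Y x F, i.e.
   finite sums  sum_i r_i (y_i . f_i) *)
Definition fmod := {fsfun (Y * fgword L)%type -> R with 0}.

Definition fm_zero : fmod := [fsfun k in fset0 => (0 : R) | 0].
Definition fm_add (a b : fmod) : fmod :=
  [fsfun k in finsupp a `|` finsupp b => a k + b k | 0].
Definition fm_scale (r : R) (a : fmod) : fmod :=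
  [fsfun k in finsupp a => r * a k | 0].
(* right action of g : (y . f) . g = y . (f g) *)
Definition fm_act (a : fmod) (g : fgword L) : fmod :=
  [fsfun k in [fset (k'.1, fg_mul k'.2 g) | k' in finsupp a]
     => a (k.1, fg_mul k.2 (fg_inv g)) | 0].
Definition fm_basis (y : Y) : fmod :=
  [fsfun k in [fset (y, fg_one L)] => (1 : R) | 0].
End FreeModule.

Section Category.
Variables (R : comNzRingType) (Y0 X0 : choiceType).

(* an object is the free representation over a pair (Y, X) of finite
   subsets of Y0, X0 *)
Definition robj := ({fset Y0} * {fset X0})%type.
Definition grp (A : robj) := fgword (A.2 : finType).
Definition md (A : robj) := @fmod R (A.1 : finType) (A.2 : finType).

Record rhom (A B : robj) := Hom {
  mu1 : md A -> md B;
  mu2 : grp A -> grp B;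
  mu1_add : forall a b, mu1 (fm_add a b) = fm_add (mu1 a) (mu1 b);
  mu1_scale : forall r a, mu1 (fm_scale r a) = fm_scale r (mu1 a);
  mu2_ghom : is_ghom mu2;
  mu_act : forall a g, mu1 (fm_act a g) = fm_act (mu1 a) (mu2 g)
}.

Definition hid (A : robj) : rhom A A :=
  @Hom A A id id (fun _ _ => erefl) (fun _ _ => erefl) (fun _ _ => erefl)
    (fun _ _ => erefl).

Definition hcomp (A B C : robj) (g : rhom B C) (f : rhom A B) : rhom A C.
Proof.
refine (@Hom A C (mu1 g \o mu1 f) (mu2 g \o mu2 f) _ _ _ _) => /=.
- by move=> a b; rewrite mu1_add mu1_add.
- by move=> r a; rewrite mu1_scale mu1_scale.
- by move=> u v /=; rewrite (mu2_ghom f u v) (mu2_ghom g).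
- by move=> a u; rewrite mu_act mu_act.
Defined.

Definition is_cat_auto (PO : robj -> robj)
    (PH : forall A B, rhom A B -> rhom (PO A) (PO B)) : Prop :=
  [/\ bijective PO,
      (forall A B, bijective (PH A B)),
      (forall A, PH A A (hid A) = hid (PO A)) &
      (forall A B C (g : rhom B C) (f : rhom A B),
          PH A C (hcomp g f) = hcomp (PH B C g) (PH A B f))].

(* (W_1, F_1): the free representation over ({y}, {x}) *)
Definition O1 (y : Y0) (x : X0) : robj := ([fset y], [fset x]).
Definition End1 (y : Y0) (x : X0) := rhom (O1 y x) (O1 y x).

(* the module generator 1 of W_1 = R F_1 and the group generator x of F_1 *)
Definition one1 (y : Y0) (x : X0) : md (O1 y x) := fm_basis R _ [` fset11 y].
Definition x1 (y : Y0) (x : X0) : grp (O1 y x) := fg_gen [` fset11 x].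
Definition e1 (y : Y0) (x : X0) : grp (O1 y x) := fg_one _.
Definition zero1 (y : Y0) (x : X0) : md (O1 y x) := fm_zero _ _ _.

(* m = nu_(w,g) : the endomorphism with 1 |-> w, x |-> g *)
Definition is_nu (y : Y0) (x : X0) (w : md (O1 y x)) (g : grp (O1 y x))
  (m : End1 y x) : Prop := mu1 m (one1 y x) = w /\ mu2 m (x1 y x) = g.

Definition T_e (y : Y0) (x : X0) (m : End1 y x) : Prop :=
  exists w, is_nu w (e1 y x) m.
Definition T_0 (y : Y0) (x : X0) (m : End1 y x) : Prop :=
  exists g, is_nu (zero1 y x) g m.
Definition T_x (y : Y0) (x : X0) (m : End1 y x) : Prop :=
  exists w, is_nu w (x1 y x) m.

Definition restr1 (y : Y0) (x : X0) (PO : robj -> robj)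
    (PH : forall A B, rhom A B -> rhom (PO A) (PO B))
    (h : PO (O1 y x) = O1 y x) (m : End1 y x) : End1 y x :=
  eq_rect (PO (O1 y x)) (fun A => rhom A A) (PH _ _ m) (O1 y x) h.
End Category.

Definition image_eq (T : Type) (f : T -> T) (P : T -> Prop) : Prop :=
  forall n, P n <-> exists m, P m /\ f m = n.

Definition infinite_type (T : eqType) : Prop :=
  forall s : seq T, exists t, t \notin s.

(* Main.v *)
Require Import Defs.
From HB Require Import structures.
From mathcomp Require Import all_boot all_order all_algebra.
From mathcomp Require Import finmap.
From mathcomp Require Import zify.
From Stdlib Require Import FunctionalExtensionality ProofIrrelevance.
Set Implicit Arguments. Unset Strict Implicit. Unset Printing Implicit Defensive.
Import GRing.Theory.
Local Open Scope fset_scope.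
Local Open Scope ring_scope.

Section FGLaws.
Variable L : finType.
Implicit Types (u v w : fgword L) (a b : letter L) (s t q : seq (letter L)).

Lemma inv_letterK a : inv_letter (inv_letter a) = a.
Proof. by case: a => l b; rewrite /inv_letter /= negbK. Qed.

Lemma push_inv a q : reduced q -> push a (push (inv_letter a) q) = q.
Proof.
case: q => [|c q] /=; first by rewrite eqxx.
rewrite inv_letterK; case: eqP => [->|Hc] Hr.
  case: q Hr => [|d q] //= /andP[Hd _].
  by rewrite (negbTE Hd).
by rewrite /= eqxx.
Qed.

Lemma reduced_cons a s : reduced (a :: s) -> reduced s.
Proof. by case: s => [|b s] //= /andP[]. Qed.

Lemma red_id s : reduced s -> foldr (@push L) [::] s = s.
Proof.
elim: s => [|a s IH] //= Hr.
rewrite IH; last exact: reduced_cons Hr.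
by case: s Hr {IH} => [|b s] //= /andP[/negbTE -> _].
Qed.

Lemma foldr_push_push t r a : reduced t ->
  foldr (@push L) t (push a r) = push a (foldr (@push L) t r).
Proof.
move=> Ht; case: r => [|b r] //=.
case: eqP => [->|//].
by rewrite push_inv //; apply: foldr_push_reduced.
Qed.

Lemma foldr_pushA t q s : reduced t ->
  foldr (@push L) t (foldr (@push L) q s) =
  foldr (@push L) (foldr (@push L) t q) s.
Proof.
move=> Ht; elim: s => [|a s IH] //=.
by rewrite foldr_push_push // IH.
Qed.

Lemma fg_mulA u v w : fg_mul (fg_mul u v) w = fg_mul u (fg_mul v w).
Proof. apply: val_inj => /=; exact: foldr_pushA (fgw_red w). Qed.

Lemma fg_mul1 u : fg_mul (fg_one L) u = u.
Proof. by apply: val_inj. Qed.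

Lemma fg_mulg1 u : fg_mul u (fg_one L) = u.
Proof. by apply: val_inj => /=; apply: red_id (fgw_red u). Qed.

Lemma foldl_inv acc s :
  foldl (fun acc a => push (inv_letter a) acc) acc s =
  foldr (@push L) acc (rev (map (@inv_letter L) s)).
Proof.
elim: s acc => [|a s IH] acc //=.
by rewrite IH rev_cons -cats1 foldr_cat.
Qed.

Lemma foldr_rev_inv s :
  foldr (@push L) s (rev (map (@inv_letter L) s)) = [::].
Proof.
elim: s => [|a s IH] //=.
rewrite rev_cons -cats1 foldr_cat /= inv_letterK eqxx; exact: IH.
Qed.

Lemma fg_mulVg u : fg_mul (fg_inv u) u = fg_one L.
Proof.
apply: val_inj => /=; rewrite foldl_inv; rewrite (@foldr_pushA (fgw_val u) [::]); last exact: fgw_red.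
exact: foldr_rev_inv.
Qed.

Lemma fg_mulgV u : fg_mul u (fg_inv u) = fg_one L.
Proof.
set v := fg_inv u.
have H1 : fg_mul v u = fg_one L by exact: fg_mulVg.
rewrite -[fg_mul u v]fg_mul1 -(fg_mulVg v) fg_mulA.
by rewrite -(fg_mulA v u v) H1 fg_mul1 fg_mulVg.
Qed.

Lemma fg_mulKV u v : fg_mul (fg_mul u (fg_inv v)) v = u.
Proof. by rewrite fg_mulA fg_mulVg fg_mulg1. Qed.

Lemma fg_mulVK u v : fg_mul (fg_mul u v) (fg_inv v) = u.
Proof. by rewrite fg_mulA fg_mulgV fg_mulg1. Qed.

Lemma fg_inv1 : fg_inv (fg_one L) = fg_one L.
Proof. by apply: val_inj. Qed.

Lemma fg_mul_idem u : fg_mul u u = u -> u = fg_one L.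
Proof.
move=> H; have := congr1 (fg_mul (fg_inv u)) H.
by rewrite -fg_mulA fg_mulVg fg_mul1.
Qed.

Lemma ghom1 (f : fgword L -> fgword L) :
  is_ghom f -> f (fg_one L) = fg_one L.
Proof. by move=> Hf; apply: fg_mul_idem; rewrite -Hf fg_mul1. Qed.

Lemma ghomV (f : fgword L -> fgword L) u : is_ghom f -> f (fg_inv u) = fg_inv (f u).
Proof.
move=> Hf.
have : fg_mul (f (fg_inv u)) (f u) = fg_one L by rewrite -Hf fg_mulVg ghom1.
move=> H; rewrite -[f (fg_inv u)]fg_mulg1 -(fg_mulgV (f u)) -fg_mulA H fg_mul1 //.
Qed.

Lemma ghom_ext (f g : fgword L -> fgword L) : is_ghom f -> is_ghom g ->
  (forall l, f (fg_gen l) = g (fg_gen l)) -> f =1 g.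
Proof.
move=> Hf Hg Hgen [s Hs].
elim: s Hs => [|a s IH] Hs.
  have -> : FGW Hs = fg_one L by apply: val_inj.
  by rewrite !ghom1.
have Hs' := reduced_cons Hs.
have ga : reduced [:: a] by [].
have -> : FGW Hs = fg_mul (FGW ga) (FGW Hs').
  apply: val_inj => /=; case: s Hs {IH Hs'} => [|b s] //= /andP[/negbTE -> _] //.
rewrite Hf Hg IH; congr fg_mul.
case: a ga {Hs} => l [] ga.
  by have -> : FGW ga = fg_gen l by apply: val_inj.
have -> : FGW ga = fg_inv (fg_gen l) by apply: val_inj.
by rewrite !ghomV // Hgen.
Qed.

End FGLaws.


Section OneLetter.
Variable L : finType.
Variable l0 : L.
Hypothesis Hl : forall l : L, l = l0.

Definition sgnl (a : letter L) : int := if a.2 then 1 else -1.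
Definition degs (s : seq (letter L)) : int := \sum_(a <- s) sgnl a.
Definition deg (u : fgword L) : int := degs u.
Definition xg := fg_gen l0.

Lemma degs_cons a s : degs (a :: s) = sgnl a + degs s.
Proof. by rewrite /degs big_cons. Qed.

Lemma degs_push a s : degs (push a s) = sgnl a + degs s.
Proof.
case: s => [|b s] /=; first by rewrite degs_cons.
case: eqP => [->|_]; last by rewrite degs_cons.
rewrite degs_cons addrA /sgnl /inv_letter /=.
by case: a.2; rewrite ?addrN ?addNr ?add0r.
Qed.

Lemma degs_foldr s t : degs (foldr (@push L) t s) = degs s + degs t.
Proof.
elim: s => [|a s IH] /=; first by rewrite /degs big_nil add0r.
by rewrite degs_push IH degs_cons addrA.
Qed.

Lemma deg_mul u v : deg (fg_mul u v) = deg u + deg v.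
Proof. exact: degs_foldr. Qed.

Lemma deg1 : deg (fg_one L) = 0.
Proof. by rewrite /deg /degs big_nil. Qed.

Lemma degx : deg xg = 1.
Proof. by rewrite /deg /= degs_cons /degs big_nil addr0. Qed.

Lemma deg_inv u : deg (fg_inv u) = - deg u.
Proof.
have := deg_mul (fg_inv u) u; rewrite fg_mulVg deg1 => /eqP.
by rewrite eq_sym addr_eq0 => /eqP.
Qed.

Lemma letter_eq (a : letter L) : a = (l0, a.2).
Proof. by case: a => l b /=; rewrite (Hl l). Qed.

Lemma reduced_nseq s : reduced s ->
  exists b, s = nseq (size s) (l0, b).
Proof.
elim: s => [|a s IH] Hs; first by exists true.
have [b Hb] := IH (reduced_cons Hs).
exists a.2; rewrite /= {1}(letter_eq a); congr cons.
case: s Hs Hb {IH} => [|c s] //= /andP[Hc _] Hb.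
suff <- : b = a.2 by [].
have /= Hcb := congr1 (head c) Hb.
move: Hc; rewrite Hcb /inv_letter /=.
by rewrite (Hl a.1) xpair_eqE eqxx /=; case: (a.2); case: (b).
Qed.

Lemma degs_nseq n b : degs (nseq n (l0, b)) = (if b then n%:Z else - n%:Z).
Proof.
elim: n => [|n IH]; first by rewrite /degs big_nil; case: b.
rewrite /= degs_cons IH /sgnl /=; case: (b) => //.
by rewrite intS opprD.
Qed.

Lemma deg_inj u v : deg u = deg v -> u = v.
Proof.
case: u => s Hs; case: v => t Ht; rewrite /deg /= => Hd.
apply: val_inj => /=.
have [b Hb] := reduced_nseq Hs; have [c Hc] := reduced_nseq Ht.
move: Hd; rewrite Hb Hc !degs_nseq.
case: b {Hb}; case: c {Hc} => /=.
- by move=> [->].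
- move=> /eqP; rewrite -subr_eq0 opprK -PoszD => /eqP [] /eqP.
  by rewrite addn_eq0 => /andP[/eqP -> /eqP ->].
- move=> /eqP; rewrite eq_sym -subr_eq0 opprK -PoszD => /eqP [] /eqP.
  by rewrite addn_eq0 => /andP[/eqP -> /eqP ->].
- by move=> /eqP; rewrite eqr_opp => /eqP [->].
Qed.

Lemma xg_comm u : fg_mul xg u = fg_mul u xg.
Proof. by apply: deg_inj; rewrite !deg_mul addrC. Qed.

Lemma ghom_ext1 (f g : fgword L -> fgword L) : is_ghom f -> is_ghom g ->
  f xg = g xg -> f =1 g.
Proof. by move=> Hf Hg Hx; apply: ghom_ext => // l; rewrite (Hl l). Qed.

Lemma fg_ind (P : fgword L -> Prop) : P (fg_one L) ->
  (forall u, P u -> P (fg_mul xg u)) ->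
  (forall u, P u -> P (fg_mul (fg_inv xg) u)) -> forall u, P u.
Proof.
move=> H1 Hx Hv [s Hs].
elim: s Hs => [|a s IH] Hs.
  by have -> : FGW Hs = fg_one L by apply: val_inj.
have Hs' := reduced_cons Hs.
have ga : reduced [:: a] by [].
have -> : FGW Hs = fg_mul (FGW ga) (FGW Hs').
  apply: val_inj => /=; case: s Hs {IH Hs'} => [|b s] //= /andP[/negbTE -> _] //.
case: a ga {Hs} => l [] ga.
  have -> : FGW ga = xg by apply: val_inj; rewrite /= (Hl l).
  exact: Hx.
have -> : FGW ga = fg_inv xg by apply: val_inj; rewrite /= (Hl l).
exact: Hv.
Qed.

Lemma ghom_deg (g : fgword L -> fgword L) : is_ghom g ->
  forall u, deg (g u) = deg u * deg (g xg).
Proof.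
move=> Hg; apply: fg_ind.
- by rewrite ghom1 // deg1 mul0r.
- by move=> u IH; rewrite Hg !deg_mul IH degx mulrDl mul1r.
- move=> u IH; rewrite Hg !deg_mul IH (ghomV _ Hg) !deg_inv degx.
  by rewrite mulrDl mulN1r.
Qed.

Lemma ghom_idem (g : fgword L -> fgword L) : is_ghom g ->
  g (g xg) = g xg -> g xg = fg_one L \/ g xg = xg.
Proof.
move=> Hg H.
have := ghom_deg Hg (g xg); rewrite H => /eqP.
rewrite -{1}[deg (g xg)]mulr1 eq_sym -subr_eq0 -mulrBr mulf_eq0 subr_eq0.
case/orP=> /eqP Hd.
  by left; apply: deg_inj; rewrite Hd deg1.
by right; apply: deg_inj; rewrite Hd degx.
Qed.

End OneLetter.


Section FM.
Variables (R : comNzRingType) (Y L : finType).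
Local Notation fm := (@fmod R Y L).
Implicit Types (a b : fm).

Lemma fm_zeroE k : fm_zero R Y L k = 0.
Proof. by rewrite /fm_zero fsfun_fun. Qed.

Lemma fm_addE a b k : fm_add a b k = a k + b k.
Proof.
rewrite /fm_add fsfun_fun; case: ifP => //.
rewrite in_fsetU => /negbT; rewrite negb_or => /andP[Ha Hb].
by rewrite !fsfun_dflt // addr0.
Qed.

Lemma fm_scaleE r a k : fm_scale r a k = r * a k.
Proof.
rewrite /fm_scale fsfun_fun; case: ifP => // /negbT Ha.
by rewrite fsfun_dflt // mulr0.
Qed.

Lemma fm_actE a g k : fm_act a g k = a (k.1, fg_mul k.2 (fg_inv g)).
Proof.
rewrite /fm_act fsfun_fun; case: ifP => // /negbT Hk.
apply/esym; apply: fsfun_dflt; apply: contra Hk => Hin.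
apply/imfsetP; exists (k.1, fg_mul k.2 (fg_inv g)) => //=.
by rewrite fg_mulKV; case: k {Hin}.
Qed.

Lemma fm_basisE (y : Y) k : fm_basis R L y k = if k == (y, fg_one L) then 1 else 0.
Proof. by rewrite /fm_basis fsfun_fun in_fset1. Qed.

Lemma fm_ext a b : (forall k, a k = b k) -> a = b.
Proof. by move=> H; apply/fsfunP. Qed.

Lemma fg_invM (g h : fgword L) : fg_inv (fg_mul g h) = fg_mul (fg_inv h) (fg_inv g).
Proof.
have H : fg_mul (fg_mul (fg_inv h) (fg_inv g)) (fg_mul g h) = fg_one L.
  by rewrite fg_mulA -(fg_mulA (fg_inv g)) fg_mulVg fg_mul1 fg_mulVg.
by rewrite -[fg_inv _]fg_mul1 -H fg_mulVK.
Qed.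

Lemma fm_act_act a g h : fm_act (fm_act a g) h = fm_act a (fg_mul g h).
Proof. by apply: fm_ext => k; rewrite !fm_actE /= fg_invM fg_mulA. Qed.

Lemma fm_act1 a : fm_act a (fg_one L) = a.
Proof. by apply: fm_ext => -[y u]; rewrite fm_actE fg_inv1 fg_mulg1. Qed.

Lemma fm_act_add a b g : fm_act (fm_add a b) g = fm_add (fm_act a g) (fm_act b g).
Proof. by apply: fm_ext => k; rewrite !(fm_actE, fm_addE). Qed.

Lemma fm_act_scale r a g : fm_act (fm_scale r a) g = fm_scale r (fm_act a g).
Proof. by apply: fm_ext => k; rewrite !(fm_actE, fm_scaleE). Qed.

Lemma fm_scale0 a : fm_scale 0 a = fm_zero R Y L.
Proof. by apply: fm_ext => k; rewrite fm_scaleE fm_zeroE mul0r. Qed.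

Lemma fm_act0 g : fm_act (fm_zero R Y L) g = fm_zero R Y L.
Proof. by apply: fm_ext => k; rewrite fm_actE !fm_zeroE. Qed.

Lemma fm_add0 : fm_add (fm_zero R Y L) (fm_zero R Y L) = fm_zero R Y L.
Proof. by apply: fm_ext => k; rewrite fm_addE !fm_zeroE addr0. Qed.

Lemma fm_scaler0 r : fm_scale r (fm_zero R Y L) = fm_zero R Y L.
Proof. by apply: fm_ext => k; rewrite fm_scaleE !fm_zeroE mulr0. Qed.

End FM.


Section FM1.
Variables (R : comNzRingType) (Y L : finType).
Variable l0 : L.
Hypothesis Hl : forall l : L, l = l0.
Local Notation fm := (@fmod R Y L).
Local Notation x := (xg l0).

Lemma shift_zero (b : fm) : fm_act b x = b -> b = fm_zero R Y L.
Proof.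
move=> Hb; apply: fm_ext => k; rewrite fm_zeroE.
have Hstep : forall j : Y * fgword L, b (j.1, fg_mul j.2 x) = b j.
  move=> j; rewrite -{1}Hb fm_actE /= fg_mulVK; by case: j.
pose pw n := iter n (fun u => fg_mul u x) k.2.
have Hpw : forall n, b (k.1, pw n) = b k.
  elim=> [|n IH] /=; first by rewrite -surjective_pairing.
  by rewrite (Hstep (k.1, pw n)).
have Hdeg : forall n, deg (pw n) = deg k.2 + n%:Z.
  elim=> [|n IH] /=; first by rewrite addr0.
  by rewrite deg_mul IH degx -addn1 PoszD addrA.
apply/eqP; apply/negPn/negP => Hk.
pose M := (\max_(j <- finsupp b) `|deg j.2|)%N.
have Hle : forall j, j \in finsupp b -> (`|deg j.2| <= M)%N.
  by move=> j Hj; exact: (leq_bigmax_seq j Hj).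
set n := (M + `|deg k.2|).+1.
have Hin : (k.1, pw n) \in finsupp b by rewrite mem_finsupp Hpw.
have := Hle _ Hin; rewrite Hdeg /n.
move: (deg k.2) => d; lia.
Qed.

Variable y0 : Y.
Hypothesis Hy : forall y : Y, y = y0.

Lemma decomp (f : fm -> fm) (phi : fgword L -> fgword L) :
  (forall a b, f (fm_add a b) = fm_add (f a) (f b)) ->
  (forall r a, f (fm_scale r a) = fm_scale r (f a)) ->
  (forall a g, f (fm_act a g) = fm_act (f a) (phi g)) ->
  f (fm_basis R L y0) = fm_zero R Y L ->
  forall b, f b = fm_zero R Y L.
Proof.
move=> Hadd Hsc Hact H0 b.
have Hf0 : f (fm_zero R Y L) = fm_zero R Y L.
  by rewrite -{1}(fm_scale0 (fm_zero R Y L)) Hsc fm_scale0.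
move: {2}#|` finsupp b| (leqnn #|` finsupp b|) => n.
elim: n b => [|n IH] b Hn.
  have Hb : b = fm_zero R Y L.
    apply: fm_ext => k; rewrite fm_zeroE.
    have : finsupp b = fset0 by apply: cardfs0_eq; lia.
    by move=> Hs; apply: fsfun_dflt; rewrite Hs inE.
  by rewrite Hb.
case: (fset_0Vmem (finsupp b)) => [Hs|[k Hk]].
  apply: IH; by rewrite Hs cardfs0.
pose d := fm_act (fm_basis R L y0) k.2.
have Hd : forall j, d j = if j == k then 1 else 0.
  move=> j; rewrite /d fm_actE fm_basisE.
  move: (k.1) (k.2) (surjective_pairing k) => k1 k2 ->; case: j => j1 j2 /=.
  rewrite (Hy j1) (Hy k1) !xpair_eqE eqxx /=.
  case: (eqVneq j2 k2) => [->|Hne]; first by rewrite fg_mulgV eqxx.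
  case: eqP => // He; exfalso; move/eqP: Hne; apply.
  by rewrite -[j2](fg_mulKV j2 k2) He fg_mul1.
pose b' := fm_add b (fm_scale (- b k) d).
have Hbb : b = fm_add (fm_scale (b k) d) b'.
  apply: fm_ext => j; rewrite !(fm_addE, fm_scaleE) Hd.
  by case: eqP => [->|_]; rewrite ?mulr1 ?mulr0 ?add0r ?addr0 // addrCA subrr addr0.
have Hsub : finsupp b' `<=` finsupp b `\ k.
  apply/fsubsetP => j; rewrite in_fsetD1 !mem_finsupp /b' fm_addE fm_scaleE Hd.
  case: (eqVneq j k) => [->|Hne]; first by rewrite mulr1 subrr eqxx.
  by rewrite mulr0 addr0 => ->.
rewrite Hbb Hadd Hsc /d Hact H0 fm_act0 fm_scaler0 IH ?fm_add0 //.
have := fsubset_leq_card Hsub; have := cardfsD1 k (finsupp b); rewrite Hk.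
move=> /= H1 H2; apply: leq_trans H2 _; by move: Hn; rewrite H1 add1n ltnS.
Qed.

End FM1.


Section MonoidArg.
Variables (M : Type) (op : M -> M -> M) (z c : M) (psi : M -> M).
Hypothesis opA : forall a b d, op (op a b) d = op a (op b d).
Hypothesis zL : forall m, op z m = z.
Hypothesis zR : forall m, op m z = z.
Hypothesis cc : op c c = c.
Hypothesis cC : forall m, op c m = op m c.
Hypothesis cz : c <> z.
Hypothesis cmin : forall f, op f f = f -> op f c = f -> f = z \/ f = c.
Hypothesis Hk0 : forall e, (forall m, op e m = op m e) -> op c e = z -> e = z.
Hypothesis psiM : forall a b, psi (op a b) = op (psi a) (psi b).
Hypothesis psi_inj : injective psi.
Hypothesis psi_surj : forall n, exists m, psi m = n.

Lemma psi_z : psi z = z.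
Proof.
have [a Ha] := psi_surj z.
by rewrite -(zR a) psiM Ha zL.
Qed.

Lemma psi_c : psi c = c.
Proof.
set d := psi c.
have dd : op d d = d by rewrite /d -psiM cc.
have dC : forall m, op d m = op m d.
  move=> m; have [m' <-] := psi_surj m; by rewrite /d -!psiM cC.
have dz : d <> z by move=> H; apply: cz; apply: psi_inj; rewrite psi_z.
have dmin : forall f, op f f = f -> op f d = f -> f = z \/ f = d.
  move=> f; have [f' <-] := psi_surj f => Hff Hfd.
  have Hf'f' : op f' f' = f' by apply: psi_inj; rewrite psiM.
  have Hf'c : op f' c = f' by apply: psi_inj; rewrite psiM.
  case: (cmin Hf'f' Hf'c) => ->; [left; exact: psi_z | by right].
have h1 : op (op c d) c = op c d by rewrite opA (dC c) -opA cc.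
have fd : op (op c d) d = op c d by rewrite opA dd.
have ff : op (op c d) (op c d) = op c d by rewrite -opA h1 fd.
case: (cmin ff h1) => Hf.
  by exfalso; apply: dz; apply: Hk0 => //.
case: (dmin _ ff fd) => Hf'.
  by exfalso; apply: cz; rewrite -Hf.
by rewrite -Hf' Hf.
Qed.

End MonoidArg.

Lemma rhom_ext (R : comNzRingType) (Y0 X0 : choiceType) (A B : robj Y0 X0)
  (m m' : rhom R A B) : mu1 m =1 mu1 m' -> mu2 m =1 mu2 m' -> m = m'.
Proof.
case: m => f1 f2 a1 s1 g1 c1; case: m' => f1' f2' a1' s1' g1' c1' /= H1 H2.
have E1 := functional_extensionality _ _ H1.
have E2 := functional_extensionality _ _ H2.
subst f1' f2'.
by rewrite (proof_irrelevance _ a1 a1') (proof_irrelevance _ s1 s1')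
  (proof_irrelevance _ g1 g1') (proof_irrelevance _ c1 c1').
Qed.

Section Concrete.
Variables (R : comNzRingType) (Y0 X0 : choiceType) (y : Y0) (x : X0).
Local Notation O := (O1 y x).
Local Notation E := (End1 R y x).
Local Notation lx := ([` fset11 x] : [fset x]).
Local Notation ly := ([` fset11 y] : [fset y]).
Local Notation fz := (fm_zero R [fset y] [fset x]).

Lemma Hlx : forall l : [fset x], l = lx.
Proof. by case=> l Hl; apply: val_inj => /=; apply/fset1P. Qed.

Lemma Hly : forall l : [fset y], l = ly.
Proof. by case=> l Hl; apply: val_inj => /=; apply/fset1P. Qed.

Definition zE : E.
Proof.
refine (@Defs.Hom R _ _ O O (fun _ => fz) (fun _ => fg_one _) _ _ _ _).
- by move=> a b; rewrite fm_add0.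
- by move=> r a; rewrite fm_scaler0.
- by move=> u v; rewrite fg_mul1.
- by move=> a g; rewrite fm_act0.
Defined.

Definition cE : E.
Proof.
refine (@Defs.Hom R _ _ O O (fun _ => fz) id _ _ _ _).
- by move=> a b; rewrite fm_add0.
- by move=> r a; rewrite fm_scaler0.
- by [].
- by move=> a g; rewrite fm_act0.
Defined.

Definition sE : E.
Proof.
refine (@Defs.Hom R _ _ O O (fun a => fm_act a (x1 y x)) id _ _ _ _).
- by move=> a b; rewrite fm_act_add.
- by move=> r a; rewrite fm_act_scale.
- by [].
- by move=> a g /=; rewrite !fm_act_act (xg_comm Hlx).
Defined.

Local Notation comp := (@hcomp R Y0 X0 O O O).

Lemma compA (a b d : E) : comp (comp a b) d = comp a (comp b d).
Proof. by apply: rhom_ext. Qed.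

Lemma mu1_0 (m : E) : mu1 m fz = fz.
Proof. by rewrite -{1}(fm_scale0 fz) mu1_scale fm_scale0. Qed.

Lemma mu2_1 (m : E) : mu2 m (fg_one _) = fg_one _.
Proof. exact: ghom1 (mu2_ghom m). Qed.

Lemma zL (m : E) : comp zE m = zE.
Proof. by apply: rhom_ext. Qed.

Lemma zR (m : E) : comp m zE = zE.
Proof. by apply: rhom_ext => a /=; rewrite ?mu1_0 ?mu2_1. Qed.

Lemma cc : comp cE cE = cE.
Proof. by apply: rhom_ext. Qed.

Lemma cm_mu1 (m : E) a : mu1 (comp cE m) a = fz. Proof. by []. Qed.
Lemma cm_mu2 (m : E) u : mu2 (comp cE m) u = mu2 m u. Proof. by []. Qed.

Lemma cC (m : E) : comp cE m = comp m cE.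
Proof. by apply: rhom_ext => a /=; rewrite ?mu1_0. Qed.

Lemma cz : cE <> zE.
Proof.
move=> H; have := congr1 (fun m : E => mu2 m (x1 y x)) H => /= /(congr1 val).
by [].
Qed.

Lemma ghom_id : is_ghom (@id (grp O)). Proof. by []. Qed.
Lemma ghom_one : is_ghom (fun _ : grp O => fg_one [fset x]).
Proof. by move=> u v; rewrite fg_mul1. Qed.

Lemma cmin (f : E) : comp f f = f -> comp f cE = f -> f = zE \/ f = cE.
Proof.
move=> Hff Hfc.
have Hf1 : forall a, mu1 f a = fz.
  by move=> a; rewrite -Hfc /= mu1_0.
have Hidem : mu2 f (mu2 f (x1 y x)) = mu2 f (x1 y x).
  by have := congr1 (fun m : E => mu2 m (x1 y x)) Hff.
case: (ghom_idem Hlx (mu2_ghom f) Hidem) => H.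
  left; apply: rhom_ext => // u /=.
  exact: (ghom_ext1 Hlx (mu2_ghom f) ghom_one).
right; apply: rhom_ext => // u /=.
exact: (ghom_ext1 Hlx (mu2_ghom f) ghom_id).
Qed.

Lemma Hk0 (e : E) : (forall m, comp e m = comp m e) -> comp cE e = zE -> e = zE.
Proof.
move=> HC Hce.
have H2 : forall u, mu2 e u = fg_one _.
  move=> u; have := congr1 (fun m : E => mu2 m u) Hce; by [].
apply: rhom_ext => // a /=.
have := congr1 (fun m : E => mu1 m a) (HC sE) => /= H.
apply: (@shift_zero _ _ _ lx); change (fm_act (mu1 e a) (x1 y x) = mu1 e a).
by rewrite -H mu_act H2 fm_act1.
Qed.


Lemma det1 (m : E) : mu1 m (one1 R y x) = fz -> forall a, mu1 m a = fz.
Proof. by move=> H a; apply: (decomp Hly (mu1_add m) (mu1_scale m) (mu_act m) H). Qed.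

Lemma Te_iff (m : E) : T_e m <-> comp cE m = zE.
Proof.
split.
  case=> w [_ H]; apply: rhom_ext => // u /=.
  exact: (ghom_ext1 Hlx (mu2_ghom m) ghom_one H u).
move=> H; exists (mu1 m (one1 R y x)); split => //.
by have := congr1 (fun m : E => mu2 m (x1 y x)) H.
Qed.

Lemma Tx_iff (m : E) : T_x m <-> comp cE m = cE.
Proof.
split.
  case=> w [_ H]; apply: rhom_ext => // u /=.
  exact: (ghom_ext1 Hlx (mu2_ghom m) ghom_id H u).
move=> H; exists (mu1 m (one1 R y x)); split => //.
by have := congr1 (fun m : E => mu2 m (x1 y x)) H.
Qed.

Lemma T0_iff (m : E) : T_0 m <-> comp cE m = m.
Proof.
split.
  case=> g [H _]; apply: rhom_ext => // a /=.
  by rewrite det1.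
move=> H; exists (mu2 m (x1 y x)); split => //.
by rewrite -H.
Qed.

Lemma nu0x (m : E) : is_nu (zero1 R y x) (x1 y x) m -> m = cE.
Proof.
case=> H1 H2; apply: rhom_ext => [a|u] /=; first by rewrite det1.
exact: (ghom_ext1 Hlx (mu2_ghom m) ghom_id H2 u).
Qed.

End Concrete.

Lemma cast_comp (R : comNzRingType) (Y0 X0 : choiceType) (A B : robj Y0 X0)
  (h : A = B) (f g : rhom R A A) :
  eq_rect A (fun A => rhom R A A) (hcomp f g) B h =
  hcomp (eq_rect A (fun A => rhom R A A) f B h) (eq_rect A (fun A => rhom R A A) g B h).
Proof. by case: B / h. Qed.

Lemma cast_bij (R : comNzRingType) (Y0 X0 : choiceType) (A B : robj Y0 X0)
  (h : A = B) : bijective (fun f : rhom R A A => eq_rect A (fun A => rhom R A A) f B h).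
Proof. by case: B / h; exists id. Qed.

Lemma image_eq_of (T : Type) (f : T -> T) (P : T -> Prop) :
  bijective f -> (forall m, P (f m) <-> P m) -> image_eq f P.
Proof.
move=> [g fg gf] HP n; split.
  by move=> Hn; exists (g n); rewrite gf; split => //; apply/HP; rewrite gf.
by case=> m [Hm <-]; apply/HP.
Qed.


Theorem mainTheorem15 (R : comNzRingType) (Y0 X0 : choiceType)
  (Y0_inf : infinite_type Y0) (X0_inf : infinite_type X0)
  (y : Y0) (x : X0)
  (PO : robj Y0 X0 -> robj Y0 X0)
  (PH : forall A B, rhom R A B -> rhom R (PO A) (PO B))
  (HPhi : is_cat_auto PH)
  (h1 : PO (O1 y x) = O1 y x) :
  image_eq (restr1 PH h1) (@T_e R Y0 X0 y x) /\
  image_eq (restr1 PH h1) (@T_0 R Y0 X0 y x) /\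
  image_eq (restr1 PH h1) (@T_x R Y0 X0 y x) /\
  (forall m : End1 R y x, is_nu (zero1 R y x) (x1 y x) m ->
     restr1 PH h1 m = m).
Proof.
case: HPhi => _ Hbij _ Hfun.
set psi := restr1 PH h1.
have psi_bij : bijective psi.
  exact: (bij_comp (cast_bij R h1) (Hbij (O1 y x) (O1 y x))).
have psiM : forall a b : End1 R y x,
    psi (hcomp a b) = hcomp (psi a) (psi b).
  by move=> a b; rewrite /psi /restr1 Hfun cast_comp.
have psi_inj : injective psi by exact: bij_inj.
have psi_surj : forall n, exists m, psi m = n.
  by case: psi_bij => g fg gf n; exists (g n); rewrite gf.
have Hc : psi (cE R y x) = cE R y x.
  apply: (psi_c (@compA R Y0 X0 y x) (@zL R Y0 X0 y x) (@zR R Y0 X0 y x)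
     (@cc R Y0 X0 y x) (@cC R Y0 X0 y x) (@cz R Y0 X0 y x)
     (@cmin R Y0 X0 y x) (@Hk0 R Y0 X0 y x) psiM psi_inj psi_surj).
have Hz : psi (zE R y x) = zE R y x.
  exact: (psi_z (@zL R Y0 X0 y x) (@zR R Y0 X0 y x) psiM psi_surj).
have Hpres : forall K : End1 R y x, psi K = K -> forall m,
    hcomp (cE R y x) (psi m) = K <-> hcomp (cE R y x) m = K.
  move=> K HK m; rewrite -{1}Hc -psiM -{1}HK; split; first exact: psi_inj.
  by move=> ->.
split; [|split; [|split]].
- apply: image_eq_of => // m; rewrite !Te_iff; exact: Hpres.
- apply: image_eq_of => // m; rewrite !T0_iff -{1}Hc -psiM.
  by split; [exact: psi_inj | move=> ->].
- apply: image_eq_of => // m; rewrite !Tx_iff; exact: Hpres.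
- by move=> m /nu0x ->.
Qed.
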